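(* Let $(x^J_{i,k})$ be generated by the interleaved consensus and projected gradient descent iteration described in the context, under the standing assumptions, with SLC constant $M>0$ and BUC constant $\bar M>0$, and with each $B_k$ a nonnegative doubly stochastic matrix. Then for every $y\in\mathcal{X}$ and every $k\ge 0$, $$\eta_{k+1}^2 \le (1+\gamma_k)\,\eta_k^2 - 2\alpha_k M\big(f(\bar{x}_{0,k})-f(y)\big) + \alpha_k^2\,(C_1^2+C_2^2+C_3^2) + \alpha_k C_4 \max_{J}\|\delta^J_k\|,$$ where $\eta_k^2=\sum_{J=1}^S\|x^J_{0,k}-y\|^2$, $\gamma_k=\frac{1}{S}\big(2\alpha_k^2\bar M^2\,\mathbf{N}\,\mathbf{L}+\alpha_k\bar M\,\mathbf{N}\max_J\|\delta^J_k\|\big)$, $C_1^2=\sum_{i=1}^{\Delta}\sum_{J=1}^S\big(\sum_{h=1}^C|W_{i-1,k}[J,h]|\,L_h\big)^2$, $C_2^2=4(\bar M\mathbf{L})^2$, $C_3^2=2\bar M^2\mathbf{N}\mathbf{L}$, and $C_4=\bar M(2\mathbf{L}+\mathbf{N})$.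
   Context: Standing setup. Integers $S\ge1$ (servers), $C\ge1$ (clients), $D\ge1$, $\Delta\ge1$. $\mathcal{X}\subseteq\mathbb{R}^D$ is a nonempty convex compact set and $\mathcal{P}_{\mathcal{X}}$ is Euclidean projection onto $\mathcal{X}$. For $h=1,\dots,C$, $f_h:\mathbb{R}^D\to\mathbb{R}$ is continuously differentiable and convex with gradient $g_h$; there are constants $L_h$ with $\|g_h(x)\|\le L_h$ for all $x\in\mathcal{X}$ and constants $N_h>0$ with $\|g_h(x)-g_h(y)\|\le N_h\|x-y\|$ for all $x,y\in\mathcal{X}$. Set $\mathbf{L}=\sum_h L_h$, $\mathbf{N}=\sum_h N_h$, $f=\sum_{h=1}^C f_h$, $f^*=\min_{x\in\mathcal{X}}f(x)$, $\mathcal{X}^*=\{x\in\mathcal{X}: f(x)=f^*\}$, $\mathrm{dist}(x,\mathcal{X}^* )=\inf_{x^*\in\mathcal{X}^*}\|x-x^*\|$. Norms are Euclidean. Step sizes $\alpha_k>0$. Weight matrices $W_{i,k}\in\mathbb{R}^{S\times C}$ ($0\le i\le\Delta-1$, $k\ge0$), entries possibly negative. Symmetric Learning Condition (SLC): there is $M>0$ with $\sum_{i=1}^{\Delta}\sum_{J=1}^S W_{i-1,k}[J,h]=M$ for all $k\ge0$ and all $h$. Bounded Update Condition (BUC): there is $\bar M>0$ with $\sum_{i=1}^{\Delta}\sum_{J=1}^S |W_{i-1,k}[J,h]|\le\bar M$ for all $k,h$. Consensus matrices $B_k\in\mathbb{R}^{S\times S}$ have nonnegative entries. Iteration: given $x^J_{0,0}\in\mathcal{X}$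 ($J=1,\dots,S$), for each $k\ge0$ and $i=1,\dots,\Delta$, $x^J_{i,k}=\mathcal{P}_{\mathcal{X}}\big[x^J_{i-1,k}-\alpha_k\sum_{h=1}^C W_{i-1,k}[J,h]\,g_h(x^J_{i-1,k})\big]$, and then $x^I_{0,k+1}=\sum_{J=1}^S B_k[I,J]\,x^J_{\Delta,k}$. Averages: $\bar x_{i,k}=\frac1S\sum_{J=1}^S x^J_{i,k}$; disagreements: $\delta^J_k=x^J_{0,k}-\bar x_{0,k}$. *)

(* Defs.v *)
From Stdlib Require Import Reals Lra.
From HB Require Import structures.
From mathcomp Require Import all_boot.
Set Implicit Arguments. Unset Strict Implicit. Unset Printing Implicit Defensive.

Local Open Scope R_scope.

Lemma Rplus_assoc' : associative Rplus.
Proof. intros a b c; symmetry; apply Rplus_assoc. Qed.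
HB.instance Definition _ := Monoid.isComLaw.Build R R0 Rplus
  Rplus_assoc' Rplus_comm Rplus_0_l.

Definition sumR (n : nat) (F : 'I_n -> R) : R := \big[Rplus/0]_(i < n) F i.
(* finite max over 'I_n of nonnegative quantities (0 for n = 0) *)
Definition maxR (n : nat) (F : 'I_n -> R) : R := \big[Rmax/0]_(i < n) F i.

Definition vec (D : nat) := 'I_D -> R.
Definition vadd D (u v : vec D) : vec D := fun d => u d + v d.
Definition vsub D (u v : vec D) : vec D := fun d => u d - v d.
Definition vscale D (a : R) (u : vec D) : vec D := fun d => a * u d.
Definition vsum D (n : nat) (F : 'I_n -> vec D) : vec D := fun d => sumR (fun i => F i d).
Definition dot D (u v : vec D) : R := sumR (fun d => u d * v d).
Definition vnorm D (u : vec D) : R := sqrt (dot u u).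

Definition convex_set D (X : vec D -> Prop) : Prop :=
  forall x y t, X x -> X y -> 0 <= t <= 1 ->
    X (vadd (vscale t x) (vscale (1 - t) y)).
Definition closed_set D (X : vec D -> Prop) : Prop :=
  forall z, (forall eps, 0 < eps -> exists x, X x /\ vnorm (vsub x z) < eps) -> X z.
Definition bounded_set D (X : vec D -> Prop) : Prop :=
  exists r, forall x, X x -> vnorm x <= r.
(* compact subset of R^D = closed and bounded (Heine-Borel) *)
Definition compact_set D (X : vec D -> Prop) : Prop := closed_set X /\ bounded_set X.

Definition is_projection D (X : vec D -> Prop) (P : vec D -> vec D) : Prop :=
  forall z, X (P z) /\ forall y, X y -> vnorm (vsub z (P z)) <= vnorm (vsub z y).

Definition convex_fun D (f : vec D -> R) : Prop :=
  forall x y t, 0 <= t <= 1 ->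
    f (vadd (vscale t x) (vscale (1 - t) y)) <= t * f x + (1 - t) * f y.

Definition has_gradient D (f : vec D -> R) (g : vec D -> vec D) : Prop :=
  forall x eps, 0 < eps -> exists delta, 0 < delta /\
    forall y, vnorm (vsub y x) < delta ->
      Rabs (f y - f x - dot (g x) (vsub y x)) <= eps * vnorm (vsub y x).

Definition continuous_vec D (g : vec D -> vec D) : Prop :=
  forall x eps, 0 < eps -> exists delta, 0 < delta /\
    forall y, vnorm (vsub y x) < delta -> vnorm (vsub (g y) (g x)) < eps.

Definition doubly_stochastic (S : nat) (B : 'I_S -> 'I_S -> R) : Prop :=
  (forall I J, 0 <= B I J) /\
  (forall I, sumR (fun J => B I J) = 1) /\
  (forall J, sumR (fun I => B I J) = 1).

(* Main.v *)
Require Import Defs.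
From Stdlib Require Import Reals Lra FunctionalExtensionality.
From HB Require Import structures.
From mathcomp Require Import all_boot.
Local Open Scope R_scope.
Set Implicit Arguments. Unset Strict Implicit.


Lemma sumR0 (F : 'I_0 -> R) : sumR F = 0.
Proof. by rewrite /sumR big_ord0. Qed.
Lemma sumRS n (F : 'I_n.+1 -> R) :
  sumR F = sumR (fun i : 'I_n => F (widen_ord (leqnSn n) i)) + F ord_max.
Proof. by rewrite /sumR big_ord_recr. Qed.
Lemma sumR_ext n (F G : 'I_n -> R) : (forall i, F i = G i) -> sumR F = sumR G.
Proof. move=> H; rewrite /sumR; apply: eq_bigr => i _; exact: H. Qed.
Lemma sumR_add n (F G : 'I_n -> R) : sumR (fun i => F i + G i) = sumR F + sumR G.
Proof. by rewrite /sumR big_split. Qed.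
Lemma sumR_scal n c (F : 'I_n -> R) : sumR (fun i => c * F i) = c * sumR F.
Proof.
elim: n F => [|n IH] F; first by rewrite !sumR0; ring.
rewrite !sumRS IH; ring.
Qed.
Lemma sumR_le n (F G : 'I_n -> R) : (forall i, F i <= G i) -> sumR F <= sumR G.
Proof.
elim: n F G => [|n IH] F G H; first by rewrite !sumR0; lra.
rewrite !sumRS; apply Rplus_le_compat; [apply IH => i; apply H | apply H].
Qed.
Lemma sumR_ge0 n (F : 'I_n -> R) : (forall i, 0 <= F i) -> 0 <= sumR F.
Proof. move=> H.
have -> : 0 = sumR (fun _ : 'I_n => 0).
  elim: n {F H} => [|n IH]; first by rewrite sumR0. by rewrite sumRS -IH; ring.
by apply sumR_le. Qed.
Lemma sumR_const n c : sumR (fun _ : 'I_n => c) = INR n * c.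
Proof.
elim: n => [|n IH]; first by rewrite sumR0 /=; ring.
rewrite sumRS IH S_INR; ring.
Qed.
Lemma sumR_opp n (F : 'I_n -> R) : sumR (fun i => - F i) = - sumR F.
Proof. rewrite -(@sumR_ext _ (fun i => (-1) * F i)); last by move=> i; ring.
rewrite sumR_scal; ring. Qed.
Lemma sumR_sub n (F G : 'I_n -> R) : sumR (fun i => F i - G i) = sumR F - sumR G.
Proof. rewrite /Rminus -sumR_opp -sumR_add; done. Qed.
Lemma sumR_abs n (F : 'I_n -> R) : Rabs (sumR F) <= sumR (fun i => Rabs (F i)).
Proof.
elim: n F => [|n IH] F; first by rewrite !sumR0 Rabs_R0; lra.
rewrite !sumRS; eapply Rle_trans; first apply Rabs_triang.
apply Rplus_le_compat; [apply IH | lra].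
Qed.
Lemma sumR_swap m n (F : 'I_m -> 'I_n -> R) :
  sumR (fun i => sumR (fun j => F i j)) = sumR (fun j => sumR (fun i => F i j)).
Proof. by rewrite /sumR exchange_big. Qed.
Lemma sumR_le_elem n (F : 'I_n -> R) j : (forall i, 0 <= F i) -> F j <= sumR F.
Proof.
move=> H; rewrite /sumR (bigD1 j) //=.
have : 0 <= \big[Rplus/0]_(i < n | i != j) F i.
  rewrite big_mkcond /=. have := @sumR_ge0 _ (fun i => if i != j then F i else 0).
  rewrite /sumR; apply => i; case: ifP => _; [apply H| lra].
move=> HH. rewrite -{1}(Rplus_0_r (F j)); apply Rplus_le_compat_l; exact HH.
Qed.
Lemma sumR_ge0_eq0 n (F : 'I_n -> R) j : (forall i, 0 <= F i) -> sumR F = 0 -> F j = 0.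
Proof. move=> H H0; have := sumR_le_elem j H; have := H j; lra. Qed.

Lemma maxR_ge n (F : 'I_n -> R) j : F j <= maxR F.
Proof.
elim: n F j => [|n IH] F j; first by case: j.
rewrite /maxR big_ord_recl /=.
case: (unliftP ord0 j) => [j'|] ->.
  eapply Rle_trans; last apply Rmax_r.
  exact: (IH (fun i => F (lift ord0 i))).
apply Rmax_l.
Qed.
Lemma maxR_ge0 n (F : 'I_n -> R) : 0 <= maxR F.
Proof.
elim: n F => [|n IH] F; first by rewrite /maxR big_ord0; lra.
rewrite /maxR big_ord_recl /=; eapply Rle_trans; last apply Rmax_r; apply IH.
Qed.


Lemma dot_comm D (u v : vec D) : dot u v = dot v u.
Proof. apply sumR_ext => d; ring. Qed.
Lemma dot_ext D (u u' v v' : vec D) : (forall d, u d = u' d) -> (forall d, v d = v' d) ->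
  dot u v = dot u' v'.
Proof. move=> H1 H2; apply sumR_ext => d; by rewrite H1 H2. Qed.
Lemma dot_lin D a b (u v w : vec D) :
  dot (fun d => a * u d + b * v d) w = a * dot u w + b * dot v w.
Proof.
rewrite /dot -!sumR_scal -sumR_add; apply sumR_ext => d; ring.
Qed.
Lemma dot_quad D a b (u v : vec D) :
  dot (fun d => a * u d + b * v d) (fun d => a * u d + b * v d)
  = a^2 * dot u u + 2*a*b * dot u v + b^2 * dot v v.
Proof.
rewrite /dot -!sumR_scal -!sumR_add; apply sumR_ext => d; ring.
Qed.
Lemma dot_self_ge0 D (u : vec D) : 0 <= dot u u.
Proof. apply sumR_ge0 => d; nra. Qed.
Lemma vnorm_ge0 D (u : vec D) : 0 <= vnorm u.
Proof. apply sqrt_pos. Qed.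
Lemma vnorm_sq D (u : vec D) : vnorm u ^ 2 = dot u u.
Proof. rewrite /vnorm; apply pow2_sqrt, dot_self_ge0. Qed.
Lemma dot_zero D (u v : vec D) : dot u u = 0 -> dot u v = 0.
Proof.
move=> H. have Hd : forall d, u d = 0.
  move=> d; have := @sumR_ge0_eq0 _ (fun d => u d * u d) d (fun i => ltac:(nra)) H.
  move=> /= E; nra.
rewrite /dot (@sumR_ext _ _ (fun _ => 0)); last by move=> d; rewrite Hd; ring.
rewrite sumR_const; ring.
Qed.
Lemma cs_sq D (u v : vec D) : (dot u v)^2 <= dot u u * dot v v.
Proof.
have Hu := dot_self_ge0 u; have Hv := dot_self_ge0 v.
case: (Req_dec (dot v v) 0) => Hq.
  rewrite dot_comm (dot_zero u Hq); nra.
have Hq' : 0 < dot v v by lra.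
set t := dot u v / dot v v.
have := dot_self_ge0 (fun d => 1 * u d + (- t) * v d).
rewrite dot_quad /t => H.
have E : 1 ^ 2 * dot u u + 2 * 1 * - (dot u v / dot v v) * dot u v +
      (- (dot u v / dot v v)) ^ 2 * dot v v = dot u u - (dot u v)^2 / dot v v.
  field; lra.
rewrite E in H.
have H2 : (dot u v)^2 / dot v v <= dot u u by lra.
have H3 : (dot u v)^2 <= dot u u * dot v v.
  have -> : (dot u v)^2 = ((dot u v)^2 / dot v v) * dot v v by field; lra.
  apply Rmult_le_compat_r; lra.
exact H3.
Qed.
Lemma cs D (u v : vec D) : Rabs (dot u v) <= vnorm u * vnorm v.
Proof.
rewrite /vnorm -sqrt_mult_alt; last exact: dot_self_ge0.
rewrite -sqrt_Rsqr_abs; apply sqrt_le_1_alt. rewrite /Rsqr.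
have := cs_sq u v; lra.
Qed.
Lemma dot_le_cs D (u v : vec D) : dot u v <= vnorm u * vnorm v.
Proof. have := cs u v; have := Rle_abs (dot u v); lra. Qed.
Lemma vnorm_le D (u v : vec D) : dot u u <= dot v v -> vnorm u <= vnorm v.
Proof. move=> H; by apply sqrt_le_1_alt. Qed.
Lemma vnorm_ext D (u v : vec D) : (forall d, u d = v d) -> vnorm u = vnorm v.
Proof. move=> H; rewrite /vnorm (dot_ext H H); done. Qed.
Lemma vnorm_triang D (u v : vec D) : vnorm (fun d => u d + v d) <= vnorm u + vnorm v.
Proof.
have H1 := vnorm_ge0 u; have H2 := vnorm_ge0 v.
rewrite /vnorm -(sqrt_pow2 (sqrt (dot u u) + sqrt (dot v v))); last by fold (vnorm u) (vnorm v); lra.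
apply sqrt_le_1_alt.
change (sqrt (dot u u)) with (vnorm u); change (sqrt (dot v v)) with (vnorm v).
have E := dot_quad 1 1 u v.
rewrite (@dot_ext _ (fun d => u d + v d) (fun d => 1 * u d + 1 * v d) (fun d => u d + v d) (fun d => 1 * u d + 1 * v d)) ?E; try by move=> d; ring.
have := dot_le_cs u v; have := vnorm_sq u; have := vnorm_sq v. nra.
Qed.
Lemma vnorm_scale D a (u : vec D) : vnorm (fun d => a * u d) = Rabs a * vnorm u.
Proof.
rewrite /vnorm. have -> : dot (fun d => a * u d) (fun d => a * u d) = a^2 * dot u u.
  rewrite /dot -sumR_scal; apply sumR_ext => d; ring.
rewrite sqrt_mult_alt; last by nra. rewrite -sqrt_Rsqr_abs /Rsqr.
have -> : a ^ 2 = a * a by ring. done.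
Qed.
Lemma vnorm_opp_sub D (u v : vec D) : vnorm (vsub u v) = vnorm (vsub v u).
Proof. rewrite /vnorm /dot; f_equal; apply sumR_ext => d; rewrite /vsub; ring. Qed.
Lemma vnorm_sub_triang D (u v w : vec D) : vnorm (vsub u w) <= vnorm (vsub u v) + vnorm (vsub v w).
Proof.
rewrite (@vnorm_ext _ (vsub u w) (fun d => vsub u v d + vsub v w d)); last by move=> d; rewrite /vsub; ring.
apply vnorm_triang.
Qed.


Lemma sq_from_norm D (u v : vec D) : vnorm u <= vnorm v -> dot u u <= dot v v.
Proof. move=> H; rewrite -!vnorm_sq; apply pow_incr; split; [apply vnorm_ge0|exact H]. Qed.
Lemma dot_scale_r D t (u v : vec D) : dot u (fun d => t * v d) = t * dot u v.
Proof. rewrite /dot -sumR_scal; apply sumR_ext => d; ring. Qed.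

Lemma proj_nonexp D (X : vec D -> Prop) P (HX : convex_set X) (HP : is_projection X P)
  w y : X y -> vnorm (vsub (P w) y) <= vnorm (vsub w y).
Proof.
move=> Hy. set p := P w. have [Hp Hmin] := HP w. fold p in Hp, Hmin.
set A := dot (vsub w p) (vsub y p).
set Q := dot (vsub y p) (vsub y p).
have HQ : 0 <= Q by apply dot_self_ge0.
have HA : A <= 0.
  destruct (Rle_lt_dec A 0) as [h|h]; first exact h. exfalso.
  set t := Rmin 1 (A / (Q + 1)).
  have Ht0 : 0 < t by apply Rmin_pos; [lra| apply Rdiv_lt_0_compat; lra].
  have Ht1 : t <= 1 by apply Rmin_l.
  have Ht2 : t <= A / (Q+1) by apply Rmin_r.
  have Hq := HX y p t Hy Hp (conj (Rlt_le _ _ Ht0) Ht1).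
  have H1 := sq_from_norm (Hmin _ Hq).
  rewrite (@dot_ext _ (vsub w (vadd (vscale t y) (vscale (1 - t) p)))
     (fun d => 1 * vsub w p d + (-t) * vsub y p d)
     (vsub w (vadd (vscale t y) (vscale (1 - t) p)))
     (fun d => 1 * vsub w p d + (-t) * vsub y p d)) in H1;
    try by move=> d; rewrite /vsub /vadd /vscale; ring.
  rewrite dot_quad -/A -/Q in H1.
  have H2 : 2 * A <= t * Q by nra.
  have H3 : t * Q <= A / (Q+1) * Q by apply Rmult_le_compat_r.
  have H4 : A / (Q+1) * Q < A.
    have -> : A / (Q+1) * Q = A - A / (Q+1) by field; lra.
    have : 0 < A / (Q+1) by apply Rdiv_lt_0_compat; lra. lra.
  lra.
apply vnorm_le.
rewrite (@dot_ext _ (vsub w y) (fun d => 1 * vsub w p d + (-1) * vsub y p d)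
   (vsub w y) (fun d => 1 * vsub w p d + (-1) * vsub y p d));
  try by move=> d; rewrite /vsub; ring.
rewrite (@dot_ext _ (vsub p y) (fun d => 0 * vsub w p d + (-1) * vsub y p d)
   (vsub p y) (fun d => 0 * vsub w p d + (-1) * vsub y p d));
  try by move=> d; rewrite /vsub; ring.
rewrite !dot_quad -/A -/Q.
have := dot_self_ge0 (vsub w p). nra.
Qed.

Lemma grad_ineq D (f : vec D -> R) g (Hg : has_gradient f g) (Hc : convex_fun f) x y :
  f x + dot (g x) (vsub y x) <= f y.
Proof.
set A := dot (g x) (vsub y x).
destruct (Rle_lt_dec (f x + A) (f y)) as [h|h]; first exact h. exfalso.
set gap := f x + A - f y.
have Hgap : 0 < gap by rewrite /gap; lra.
set Q := vnorm (vsub y x). have HQ : 0 <= Q by apply vnorm_ge0.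
set eps := gap / (2 * (Q + 1)).
have Heps : 0 < eps by apply Rdiv_lt_0_compat; lra.
have [delta [Hd Hdel]] := Hg x eps Heps.
set t := Rmin 1 (delta / (2 * (Q + 1))).
have Ht0 : 0 < t by apply Rmin_pos; [lra| apply Rdiv_lt_0_compat; lra].
have Ht1 : t <= 1 by apply Rmin_l.
have Ht2 : t <= delta / (2 * (Q+1)) by apply Rmin_r.
set z := vadd (vscale t y) (vscale (1 - t) x).
have Ez : forall d, vsub z x d = t * vsub y x d.
  move=> d; rewrite /z /vsub /vadd /vscale; ring.
have Nz : vnorm (vsub z x) = t * Q.
  rewrite (vnorm_ext Ez) vnorm_scale Rabs_right; [done|lra].
have Dz : dot (g x) (vsub z x) = t * A.
  rewrite (@dot_ext _ (g x) (g x) _ (fun d => t * vsub y x d)) // dot_scale_r //.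
have Hlt : vnorm (vsub z x) < delta.
  rewrite Nz.
  have : t * Q <= delta / (2 * (Q+1)) * Q by apply Rmult_le_compat_r.
  have -> : delta / (2 * (Q + 1)) * Q = delta * (Q / (2 * (Q+1))) by field; lra.
  have : Q / (2 * (Q+1)) < 1.
    apply (Rmult_lt_reg_r (2 * (Q+1))); first lra.
    have -> : Q / (2 * (Q + 1)) * (2 * (Q + 1)) = Q by field; lra. lra.
  nra.
have H1 := Hdel z Hlt. rewrite Nz Dz in H1.
have H2 := Hc y x t (conj (Rlt_le _ _ Ht0) Ht1). fold z in H2.
have H3 : - (eps * (t * Q)) <= f z - f x - t * A.
  have := Rle_abs (- (f z - f x - t * A)). rewrite Rabs_Ropp. lra.
have H4 : t * gap <= eps * (t * Q) by rewrite /gap; nra.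
have H5 : gap <= eps * Q.
  apply (Rmult_le_reg_l t); first lra. nra.
have : eps * Q < gap.
  rewrite /eps. have -> : gap / (2 * (Q + 1)) * Q = gap * (Q / (2 * (Q+1))) by field; lra.
  have : Q / (2 * (Q+1)) < 1.
    apply (Rmult_lt_reg_r (2 * (Q+1))); first lra.
    have -> : Q / (2 * (Q + 1)) * (2 * (Q + 1)) = Q by field; lra. lra.
  nra.
lra.
Qed.


Lemma sumR_zero n (F : 'I_n -> R) : (forall i, F i = 0) -> sumR F = 0.
Proof. move=> H; rewrite (sumR_ext H) sumR_const; ring. Qed.

Lemma conv_comb D (X : vec D -> Prop) (HX : convex_set X) n (b : 'I_n -> R) (p : 'I_n -> vec D) :
  (forall J, 0 <= b J) -> sumR b = 1 -> (forall J, X (p J)) ->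
  X (vsum (fun J => vscale (b J) (p J))).
Proof.
elim: n b p => [|n IH] b p Hb Hs Hp; first by rewrite sumR0 in Hs; lra.
rewrite sumRS in Hs.
set b' := fun i : 'I_n => b (widen_ord (leqnSn n) i).
set p' := fun i : 'I_n => p (widen_ord (leqnSn n) i).
have Hb' : forall i, 0 <= b' i by move=> i; apply Hb.
have Hs0 : 0 <= sumR b' by apply sumR_ge0.
have Evs : forall d, vsum (fun J => vscale (b J) (p J)) d
   = sumR (fun i => b' i * p' i d) + b ord_max * p ord_max d.
  move=> d; rewrite /vsum sumRS //.
fold b' in Hs.
case: (Req_dec (sumR b') 0) => Hz.
  have -> : vsum (fun J => vscale (b J) (p J)) = p ord_max.
    apply functional_extensionality => d; rewrite Evs sumR_zero.
      have -> : b ord_max = 1 by lra. ring.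
    move=> i; rewrite (sumR_ge0_eq0 i Hb' Hz); ring.
  apply Hp.
set s := sumR b'.
have Hsp : 0 < s by rewrite /s; lra.
have Hq := IH (fun i => b' i / s) p' (fun i => ltac:(apply Rmult_le_pos; [apply Hb'| apply Rlt_le, Rinv_0_lt_compat; lra]))
  ltac:(rewrite (@sumR_ext _ _ (fun i => / s * b' i)); [rewrite sumR_scal; rewrite /s; field; lra| move=> i; rewrite /Rdiv; ring])
  (fun i => Hp _).
have Hbm := Hb ord_max. have Hs1 : s <= 1 by rewrite /s; lra.
have Hc := HX _ _ s Hq (Hp ord_max) (conj (Rlt_le _ _ Hsp) Hs1).
have -> : vsum (fun J => vscale (b J) (p J)) =
  vadd (vscale s (vsum (fun J : 'I_n => vscale (b' J / s) (p' J)))) (vscale (1 - s) (p ord_max)).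
  apply functional_extensionality => d; rewrite Evs /vadd /vscale /vsum.
  rewrite -sumR_scal. have -> : 1 - s = b ord_max by rewrite /s; lra.
  f_equal. apply sumR_ext => i. rewrite /vscale; field; lra.
exact Hc.
Qed.

Lemma vnorm_vsum D n (F : 'I_n -> vec D) : vnorm (vsum F) <= sumR (fun i => vnorm (F i)).
Proof.
elim: n F => [|n IH] F.
  rewrite sumR0 /vnorm /dot sumR_zero ?sqrt_0; first lra.
  move=> d; rewrite /vsum sumR0; ring.
rewrite sumRS.
rewrite (@vnorm_ext _ _ (fun d => vsum (fun i : 'I_n => F (widen_ord (leqnSn n) i)) d + F ord_max d)); last first.
  move=> d; rewrite /vsum sumRS //.
eapply Rle_trans; first apply vnorm_triang.
apply Rplus_le_compat_r; apply (IH (fun i => F (widen_ord (leqnSn n) i))).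
Qed.

Lemma jensen_R n (b r : 'I_n -> R) : (forall J, 0 <= b J) -> sumR b = 1 ->
  (sumR (fun J => b J * r J))^2 <= sumR (fun J => b J * r J ^ 2).
Proof.
move=> Hb Hs. set c := sumR (fun J => b J * r J).
have H : 0 <= sumR (fun J => b J * (r J - c)^2).
  apply sumR_ge0 => J; apply Rmult_le_pos; [apply Hb| apply pow2_ge_0].
have E : forall c0, sumR (fun J => b J * (r J - c0)^2) =
   sumR (fun J => b J * r J ^ 2) - 2 * c0 * sumR (fun J => b J * r J) + c0^2 * sumR b.
  move=> c0; rewrite -!sumR_scal -sumR_sub -sumR_add; apply sumR_ext => J; ring.
rewrite E Hs -/c in H. nra.
Qed.

Lemma jensen D n (b : 'I_n -> R) (u : 'I_n -> vec D) : (forall J, 0 <= b J) -> sumR b = 1 ->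
  vnorm (vsum (fun J => vscale (b J) (u J))) ^ 2 <= sumR (fun J => b J * vnorm (u J) ^ 2).
Proof.
move=> Hb Hs.
have H1 : vnorm (vsum (fun J => vscale (b J) (u J))) <= sumR (fun J => b J * vnorm (u J)).
  eapply Rle_trans; first apply vnorm_vsum.
  apply sumR_le => J. rewrite /vscale vnorm_scale Rabs_right; [lra| have := Hb J; lra].
have H0 := vnorm_ge0 (vsum (fun J => vscale (b J) (u J))).
eapply Rle_trans; last apply (jensen_R (fun J => vnorm (u J)) Hb Hs).
apply pow_incr; lra.
Qed.


Lemma sumR_prefix (F : nat -> R) m n : (forall i, 0 <= F i) -> (m <= n)%N ->
  sumR (fun i : 'I_m => F i) <= sumR (fun i : 'I_n => F i).
Proof.
move=> H; elim: n => [|n IH] Hm.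
  have -> : m = 0%N by apply/eqP; rewrite -leqn0. lra.
rewrite leq_eqVlt in Hm; case/orP: Hm => [/eqP ->|Hm]; first lra.
rewrite [X in _ <= X]sumRS /=. have := IH Hm. have := H n. lra.
Qed.
Lemma dot_vsum_l D n (F : 'I_n -> vec D) w :
  dot (vsum F) w = sumR (fun h => dot (F h) w).
Proof.
rewrite /dot /vsum. rewrite (@sumR_ext _ _ (fun d => sumR (fun h => w d * F h d))).
  rewrite sumR_swap; apply sumR_ext => h; apply sumR_ext => d; ring.
move=> d; rewrite Rmult_comm -sumR_scal //.
Qed.
Lemma dot_scale_l D c (u w : vec D) : dot (vscale c u) w = c * dot u w.
Proof. rewrite /dot -sumR_scal; apply sumR_ext => d; rewrite /vscale; ring. Qed.

Unset Implicit Arguments. Set Strict Implicit.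

Theorem lemma3
  (S C D Delta : nat) (HS : (0 < S)%N) (HC : (0 < C)%N) (HD : (0 < D)%N)
  (HDelta : (0 < Delta)%N)
  (X : vec D -> Prop) (P : vec D -> vec D)
  (HXne : exists x, X x) (HXconv : convex_set X) (HXcomp : compact_set X)
  (HP : is_projection X P)
  (f : 'I_C -> vec D -> R) (g : 'I_C -> vec D -> vec D)
  (Hgrad : forall h, has_gradient (f h) (g h))
  (Hgcont : forall h, continuous_vec (g h))
  (Hfconv : forall h, convex_fun (f h))
  (L N : 'I_C -> R)
  (HL : forall h x, X x -> vnorm (g h x) <= L h)
  (HNpos : forall h, 0 < N h)
  (HN : forall h x y, X x -> X y ->
          vnorm (vsub (g h x) (g h y)) <= N h * vnorm (vsub x y))
  (alpha : nat -> R) (Halpha : forall k, 0 < alpha k)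
  (W : nat -> nat -> 'I_S -> 'I_C -> R)   (* W i k J h = W_{i,k}[J,h] *)
  (M Mbar : R) (HM : 0 < M) (HMbar : 0 < Mbar)
  (HSLC : forall k h, sumR (fun i : 'I_Delta => sumR (fun J => W i k J h)) = M)
  (HBUC : forall k h, sumR (fun i : 'I_Delta => sumR (fun J => Rabs (W i k J h))) <= Mbar)
  (B : nat -> 'I_S -> 'I_S -> R) (HB : forall k, doubly_stochastic (B k))
  (x : 'I_S -> nat -> nat -> vec D)     (* x J i k = x^J_{i,k} *)
  (Hx0 : forall J, X (x J 0%N 0%N))
  (Hstep : forall J i k, (1 <= i <= Delta)%N ->
     x J i k = P (vsub (x J i.-1 k)
                  (vscale (alpha k)
                     (vsum (fun h => vscale (W i.-1 k J h) (g h (x J i.-1 k)))))))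
  (Hcons : forall I k, x I 0%N k.+1 = vsum (fun J => vscale (B k I J) (x J Delta k)))
  (y : vec D) (Hy : X y) (k : nat) :
  let fsum := fun z => sumR (fun h => f h z) in
  let Lb := sumR L in
  let Nb := sumR N in
  let xbar := fun i k => vscale (/ INR S) (vsum (fun J => x J i k)) in
  let delta := fun J k => vsub (x J 0%N k) (xbar 0%N k) in
  let maxdelta := fun k => maxR (fun J => vnorm (delta J k)) in
  let eta2 := fun k => sumR (fun J => vnorm (vsub (x J 0%N k) y) ^ 2) in
  let gamma := fun k => / INR S *
      (2 * alpha k ^ 2 * Mbar ^ 2 * Nb * Lb + alpha k * Mbar * Nb * maxdelta k) in
  let C1sq := fun k => sumR (fun i : 'I_Delta => sumR (fun J =>
      (sumR (fun h => Rabs (W i k J h) * L h)) ^ 2)) in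
  let C2sq := 4 * (Mbar * Lb) ^ 2 in
  let C3sq := 2 * Mbar ^ 2 * Nb * Lb in
  let C4 := Mbar * (2 * Lb + Nb) in
  eta2 k.+1 <= (1 + gamma k) * eta2 k
               - 2 * alpha k * M * (fsum (xbar 0%N k) - fsum y)
               + alpha k ^ 2 * (C1sq k + C2sq + C3sq)
               + alpha k * C4 * maxdelta k.
Proof.
move=> fsum Lb Nb xbar delta maxdelta eta2 gamma C1sq C2sq C3sq C4.
have HL0 : forall h, 0 <= L h.
  move=> h; have [x0 Hx0'] := HXne; have := HL h x0 Hx0'; have := vnorm_ge0 (g h x0); lra.
have HXs : forall k' J i, (1 <= i <= Delta)%N -> X (x J i k').
  move=> k' J i Hi; rewrite (Hstep J i k' Hi); apply (HP _).1.
have HX0 : forall k' J, X (x J 0%N k').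
  elim=> [|k' IH] J; first exact: Hx0.
  rewrite Hcons; have [HB0 [HBr HBc]] := HB k'.
  apply: conv_comb => //; move=> J'; apply HXs; by rewrite HDelta leqnn.
have HXi : forall J i, (i <= Delta)%N -> X (x J i k).
  move=> J [|i] Hi; first exact: HX0. apply HXs; by rewrite Hi.
pose a := fun (J : 'I_S) (i : nat) => sumR (fun h => Rabs (W i k J h) * L h).
pose v := fun (J : 'I_S) (i : nat) => vsum (fun h => vscale (W i k J h) (g h (x J i k))).
have Ha0 : forall J i, 0 <= a J i.
  move=> J i; apply sumR_ge0 => h; apply Rmult_le_pos; [apply Rabs_pos|apply HL0].
have Hv : forall J i, (i <= Delta)%N -> vnorm (v J i) <= a J i.
  move=> J i Hi; eapply Rle_trans; first apply vnorm_vsum.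
  apply sumR_le => h; rewrite /vscale vnorm_scale; apply Rmult_le_compat_l;
    [apply Rabs_pos | apply HL, HXi, Hi].
have Hstep' : forall J i, (i < Delta)%N ->
    x J i.+1 k = P (vsub (x J i k) (vscale (alpha k) (v J i))).
  move=> J i Hi; apply Hstep; by rewrite Hi.
have Hak := Halpha k.
have Hone : forall J i, (i < Delta)%N ->
    vnorm (vsub (x J i.+1 k) y)^2 <= vnorm (vsub (x J i k) y)^2
      - 2 * alpha k * dot (v J i) (vsub (x J i k) y) + alpha k ^ 2 * a J i ^ 2.
  move=> J i Hi. rewrite (Hstep' J i Hi).
  have H1 := proj_nonexp (P := P) HXconv HP (vsub (x J i k) (vscale (alpha k) (v J i))) Hy.
  have H2 : vnorm (vsub (P (vsub (x J i k) (vscale (alpha k) (v J i)))) y) ^ 2 <=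
            vnorm (vsub (vsub (x J i k) (vscale (alpha k) (v J i))) y) ^ 2.
    apply pow_incr; split; [apply vnorm_ge0 | exact H1].
  eapply Rle_trans; first exact H2.
  rewrite vnorm_sq (@dot_ext _ _ (fun d => 1 * vsub (x J i k) y d + (- alpha k) * v J i d) _
     (fun d => 1 * vsub (x J i k) y d + (- alpha k) * v J i d)); try by move=> d; rewrite /vsub /vscale; ring.
  rewrite dot_quad -vnorm_sq (dot_comm _ (v J i)) -(vnorm_sq (v J i)).
  have Hvi := Hv J i (ltnW Hi). have := vnorm_ge0 (v J i).
  have : vnorm (v J i) ^ 2 <= a J i ^ 2 by apply pow_incr; split; [apply vnorm_ge0|exact Hvi].
  nra.
have Hdrift : forall J m, (m <= Delta)%N ->
    vnorm (vsub (x J m k) (x J 0%N k)) <= alpha k * sumR (fun i : 'I_m => a J i).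
  move=> J; elim=> [|m IH] Hm.
    rewrite sumR0 (@vnorm_ext _ _ (fun d => 0 * x J 0%N k d)); last by move=> d; rewrite /vsub; ring.
    rewrite vnorm_scale Rabs_R0; lra.
  have Hm' : (m < Delta)%N by [].
  eapply Rle_trans; first apply (vnorm_sub_triang _ (x J m k)).
  have H1 : vnorm (vsub (x J m.+1 k) (x J m k)) <= alpha k * a J m.
    rewrite (Hstep' J m Hm').
    eapply Rle_trans; first apply (proj_nonexp HXconv HP _ (HXi J m (ltnW Hm'))).
    rewrite (@vnorm_ext _ _ (fun d => (- alpha k) * v J m d)); last by move=> d; rewrite /vsub /vscale; ring.
    rewrite vnorm_scale Rabs_left; last lra.
    have := Hv J m (ltnW Hm'). nra.
  have H2 := IH (ltnW Hm').
  rewrite sumRS /=. lra.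
have Hasum : forall J, sumR (fun i : 'I_Delta => a J i) <= Mbar * Lb.
  move=> J. rewrite /a sumR_swap /Lb -sumR_scal. apply sumR_le => h.
  rewrite (@sumR_ext _ _ (fun i : 'I_Delta => L h * Rabs (W i k J h))); last by move=> i; ring.
  rewrite sumR_scal Rmult_comm. apply Rmult_le_compat_r; first apply HL0.
  eapply Rle_trans; last apply (HBUC k h).
  apply sumR_le => i. apply (sumR_le_elem (F := fun J' => Rabs (W i k J' h))) => J'; apply Rabs_pos.
have HSpos : 0 < INR S by apply lt_0_INR; apply/ltP.
have HSinv : sumR (fun _ : 'I_S => / INR S) = 1 by rewrite sumR_const; field; lra.
pose xb := xbar 0%N k.
have Exb : forall d, xb d = sumR (fun J => / INR S * x J 0%N k d).
  move=> d; rewrite /xb /xbar /vscale /vsum sumR_scal //.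
have Hxb : X xb.
  have -> : xb = vsum (fun J => vscale (/ INR S) (x J 0%N k)).
    apply functional_extensionality => d; rewrite Exb //.
  apply (conv_comb HXconv); [move=> J; apply Rlt_le, Rinv_0_lt_compat; lra | exact HSinv | move=> J; apply HX0].
pose e := alpha k * Mbar * Lb + maxdelta k.
have Hmd0 : 0 <= maxdelta k by apply maxR_ge0.
have HLb0 : 0 <= Lb by apply sumR_ge0.
have HNb0 : 0 <= Nb by apply sumR_ge0 => h; apply Rlt_le.
have Hdel : forall J i, (i <= Delta)%N -> vnorm (vsub (x J i k) xb) <= e.
  move=> J i Hi. eapply Rle_trans; first apply (vnorm_sub_triang _ (x J 0%N k)).
  have H1 := Hdrift J i Hi.
  have H2 := @sumR_prefix (fun i => a J i) i Delta (Ha0 J) Hi.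
  have H3 := Hasum J.
  have H4 : vnorm (vsub (x J 0%N k) xb) <= maxdelta k.
    apply (maxR_ge (fun J => vnorm (delta J k)) J).
  rewrite /e. have : alpha k * sumR (fun i0 : 'I_i => a J i0) <= alpha k * (Mbar * Lb).
    apply Rmult_le_compat_l; lra.
  lra.
pose p := vnorm (vsub xb y).
have Hp0 : 0 <= p by apply vnorm_ge0.
have Hp2 : p ^ 2 <= / INR S * eta2 k.
  rewrite /p (@vnorm_ext _ _ (vsum (fun J => vscale (/ INR S) (vsub (x J 0%N k) y)))).
    eapply Rle_trans; first apply jensen => //.
      move=> J; apply Rlt_le, Rinv_0_lt_compat; lra.
    rewrite /eta2 sumR_scal; lra.
  move=> d. rewrite /vsub Exb /vsum /vscale.
  rewrite (@sumR_ext _ (fun J => / INR S * (x J 0%N k d - y d))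
     (fun J => / INR S * x J 0%N k d + (- / INR S) * y d)); last by move=> J; ring.
  rewrite sumR_add sumR_const; field; lra.
pose G0 := fun h => dot (g h xb) (vsub xb y).
pose E := fun h => L h * e + N h * e * p.
have He0 : 0 <= e by rewrite /e; have := Rmult_le_pos _ _ (Rmult_le_pos _ _ (Rlt_le _ _ Hak) (Rlt_le _ _ HMbar)) HLb0; lra.
have HE0 : forall h, 0 <= E h.
  move=> h; rewrite /E; have := Rmult_le_pos _ _ (HL0 h) He0; have := Rmult_le_pos _ _ (Rmult_le_pos _ _ (Rlt_le _ _ (HNpos h)) He0) Hp0; lra.
have Hterm : forall J i h, (i < Delta)%N ->
    Rabs (dot (g h (x J i k)) (vsub (x J i k) y) - G0 h) <= E h.
  move=> J i h Hi.
  have HXz := HXi J i (ltnW Hi).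
  have Ed : dot (g h (x J i k)) (vsub (x J i k) y) - G0 h =
     dot (g h (x J i k)) (vsub (x J i k) xb) + dot (vsub (g h (x J i k)) (g h xb)) (vsub xb y).
    rewrite /G0 /dot -sumR_sub -sumR_add; apply sumR_ext => d; rewrite /vsub; ring.
  rewrite Ed. eapply Rle_trans; first apply Rabs_triang.
  have H1 := cs (g h (x J i k)) (vsub (x J i k) xb).
  have H2 := cs (vsub (g h (x J i k)) (g h xb)) (vsub xb y).
  have H3 := HL h _ HXz.
  have H4 := HN h _ _ HXz Hxb.
  have H5 := Hdel J i (ltnW Hi).
  have H6 := vnorm_ge0 (vsub (x J i k) xb).
  have H7 := vnorm_ge0 (g h (x J i k)).
  have H8 := vnorm_ge0 (vsub (g h (x J i k)) (g h xb)).
  have H9 := HNpos h. have H10 := HL0 h.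
  fold p in H2.
  have H11 : vnorm (g h (x J i k)) * vnorm (vsub (x J i k) xb) <= L h * e.
    apply Rmult_le_compat; lra.
  have H12 : vnorm (vsub (g h (x J i k)) (g h xb)) <= N h * e.
    eapply Rle_trans; first exact H4. apply Rmult_le_compat_l; lra.
  have H13 : vnorm (vsub (g h (x J i k)) (g h xb)) * p <= N h * e * p.
    apply Rmult_le_compat_r; lra.
  rewrite /E; lra.
have HG0 : forall h, f h xb - f h y <= G0 h.
  move=> h; have := grad_ineq (Hgrad h) (Hfconv h) xb y.
  have -> : dot (g h xb) (vsub y xb) = - G0 h.
    rewrite /G0 /dot -sumR_opp; apply sumR_ext => d; rewrite /vsub; ring.
  lra.
have Hdotv : forall J i w, dot (v J i) w = sumR (fun h => W i k J h * dot (g h (x J i k)) w).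
  move=> J i w; rewrite /v dot_vsum_l; apply sumR_ext => h; apply dot_scale_l.
have Hlow : forall (i : 'I_Delta) J,
    sumR (fun h => W i k J h * G0 h - Rabs (W i k J h) * E h) <= dot (v J i) (vsub (x J i k) y).
  move=> i J; rewrite Hdotv; apply sumR_le => h.
  have Ht := Hterm J i h (ltn_ord i).
  set G := dot (g h (x J i k)) (vsub (x J i k) y) in Ht *.
  have H := Rle_abs (- (W i k J h * (G - G0 h))). rewrite Rabs_Ropp Rabs_mult in H.
  have := Rmult_le_compat_l _ _ _ (Rabs_pos (W i k J h)) Ht. nra.
have Hsum3 : sumR (fun i : 'I_Delta => sumR (fun J => sumR (fun h =>
      W i k J h * G0 h - Rabs (W i k J h) * E h)))
    = sumR (fun h => G0 h * M - E h * sumR (fun i : 'I_Delta => sumR (fun J => Rabs (W i k J h)))).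
  rewrite (@sumR_ext _ _ (fun i : 'I_Delta => sumR (fun h => sumR (fun J =>
      W i k J h * G0 h - Rabs (W i k J h) * E h)))); last by move=> i; rewrite sumR_swap.
  rewrite sumR_swap; apply sumR_ext => h.
  rewrite -(HSLC k h) -!sumR_scal -(@sumR_sub _ (fun i : 'I_Delta => G0 h * sumR ((W i k)^~ h)) (fun i : 'I_Delta => E h * sumR (fun J => Rabs (W i k J h)))); apply sumR_ext => i; rewrite sumR_sub -!sumR_scal; f_equal; apply sumR_ext => J; ring.
have HsumE : sumR E = Lb * e + Nb * e * p.
  rewrite /E (@sumR_ext _ _ (fun h => e * L h + (e * p) * N h)); last by move=> h; ring.
  rewrite sumR_add !sumR_scal /Lb /Nb; ring.
have HsumG : fsum xb - fsum y <= sumR G0.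
  rewrite /fsum -sumR_sub; apply sumR_le => h; apply HG0.
have Hcross : M * (fsum xb - fsum y) - Mbar * (Lb * e + Nb * e * p) <=
    sumR (fun i : 'I_Delta => sumR (fun J => dot (v J i) (vsub (x J i k) y))).
  eapply Rle_trans; last first.
    apply sumR_le => i; apply sumR_le => J; apply Hlow.
  rewrite Hsum3.
  eapply Rle_trans; last first.
    apply sumR_le => h.
    have : E h * sumR (fun i : 'I_Delta => sumR (fun J => Rabs (W i k J h))) <= E h * Mbar.
      apply Rmult_le_compat_l; [apply HE0 | apply HBUC].
    instantiate (1 := fun h => G0 h * M - E h * Mbar). simpl. lra.
  rewrite sumR_sub (@sumR_ext _ (fun h => G0 h * M) (fun h => M * G0 h)); last by move=> h; ring.
  rewrite (@sumR_ext _ (fun h => E h * Mbar) (fun h => Mbar * E h)); last by move=> h; ring.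
  rewrite !sumR_scal HsumE.
  have := Rmult_le_compat_l _ _ _ (Rlt_le _ _ HM) HsumG. lra.
have Htele : forall J m, (m <= Delta)%N ->
    vnorm (vsub (x J m k) y)^2 <= vnorm (vsub (x J 0%N k) y)^2
      - 2 * alpha k * sumR (fun i : 'I_m => dot (v J i) (vsub (x J i k) y))
      + alpha k ^ 2 * sumR (fun i : 'I_m => a J i ^ 2).
  move=> J; elim=> [|m IH] Hm; first by rewrite !sumR0; lra.
  have := Hone J m Hm; have := IH (ltnW Hm); rewrite !sumRS /=; lra.
have [HB0 [HBr HBc]] := HB k.
have HI : forall I, vnorm (vsub (x I 0%N k.+1) y)^2 <=
    sumR (fun J => B k I J * vnorm (vsub (x J Delta k) y)^2).
  move=> I; rewrite (@vnorm_ext _ _ (vsum (fun J => vscale (B k I J) (vsub (x J Delta k) y)))).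
    apply jensen; [apply HB0 | apply HBr].
  move=> d; rewrite Hcons /vsub /vsum /vscale.
  rewrite (@sumR_ext _ (fun J => B k I J * (x J Delta k d - y d))
     (fun J => B k I J * x J Delta k d + (- y d) * B k I J)); last by move=> J; ring.
  rewrite sumR_add sumR_scal HBr; ring.
have Heta1 : eta2 k.+1 <= sumR (fun J => vnorm (vsub (x J Delta k) y)^2).
  rewrite /eta2. eapply Rle_trans; first by apply sumR_le => I; apply HI.
  rewrite sumR_swap; apply Req_le; apply sumR_ext => J.
  rewrite (@sumR_ext _ _ (fun I => vnorm (vsub (x J Delta k) y)^2 * B k I J)); last by move=> I; ring.
  rewrite sumR_scal HBc; ring.
have Hfin : eta2 k.+1 <= eta2 k
    - 2 * alpha k * sumR (fun i : 'I_Delta => sumR (fun J => dot (v J i) (vsub (x J i k) y)))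
    + alpha k ^ 2 * C1sq k.
  eapply Rle_trans; first exact Heta1.
  eapply Rle_trans; first by apply sumR_le => J; apply (Htele J Delta (leqnn _)).
  rewrite sumR_add sumR_sub !sumR_scal.
  have E1 := sumR_swap (fun (J : 'I_S) (i : 'I_Delta) => dot (v J i) (vsub (x J i k) y)).
  have E2 := sumR_swap (fun (J : 'I_S) (i : 'I_Delta) => a J i ^ 2).
  rewrite E1 E2 /C1sq /eta2. by apply Req_le.
change (fsum (xbar 0%N k)) with (fsum xb).
pose q := / INR S * eta2 k.
have Hq : 2 * p <= q + 1 by have := pow2_ge_0 (p - 1); rewrite /q; nra.
have Hgam : gamma k * eta2 k = (2 * alpha k ^ 2 * Mbar ^ 2 * Nb * Lb + alpha k * Mbar * Nb * maxdelta k) * q.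
  rewrite /gamma /q; ring.
have K1 : 0 <= alpha k ^ 2 * Mbar ^ 2 * Nb * Lb.
  repeat apply Rmult_le_pos; try lra; apply pow2_ge_0.
have K2 : 0 <= alpha k * Mbar * Nb * maxdelta k.
  repeat apply Rmult_le_pos; lra.
have I1 := Rmult_le_compat_l _ _ _ K1 Hq.
have I2 := Rmult_le_compat_l _ _ _ K2 Hq.
have I3 := Rmult_le_compat_l _ _ _ (Rlt_le _ _ Hak) Hcross.
have K3 : 0 <= alpha k ^ 2 * Mbar ^2 * Lb ^ 2 by repeat apply Rmult_le_pos; try lra; apply pow2_ge_0.
rewrite /C2sq /C3sq /C4 /e in I3 *.
have -> : (1 + gamma k) * eta2 k = eta2 k + gamma k * eta2 k by ring.
rewrite Hgam. have Hq0 : 0 <= q by have := pow2_ge_0 p; rewrite /q; lra. have := Rmult_le_pos _ _ K1 Hq0. lra.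
Qed.
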